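(* For every integer $l\ge 3$ there is no Neumaier graph with parameters $(6l+3,\,4l+2,\,3l;\,l+1,\,2l+1)$.
   Context: All graphs are finite, simple, undirected. A regular graph is $\lambda$-edge-regular if it has at least one edge and any two adjacent vertices have exactly $\lambda$ common neighbours. An edge-regular graph with parameters $(v,k,\lambda)$ has $v$ vertices, is $k$-regular and $\lambda$-edge-regular. For a regular graph, a clique $S$ is $e$-regular ($e>0$) if every vertex outside $S$ has exactly $e$ neighbours in $S$. A Neumaier graph with parameters $(v,k,\lambda;e,s)$ is a non-complete edge-regular graph with parameters $(v,k,\lambda)$ containing an $e$-regular clique of size $s$. *)

(* Defs.v *)
From mathcomp Require Import all_boot.
Set Implicit Arguments. Unset Strict Implicit. Unset Printing Implicit Defensive.

Definition simple_graph (T : finType) (e : rel T) : Prop :=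
  symmetric e /\ irreflexive e.

Definition nbhd (T : finType) (e : rel T) (x : T) : {set T} := [set y | e x y].

Definition regular (T : finType) (e : rel T) (k : nat) : Prop :=
  forall x : T, #|nbhd e x| = k.

Definition edge_regular (T : finType) (e : rel T) (v k lam : nat) : Prop :=
  [/\ #|T| = v, regular e k, (exists x y : T, e x y) &
      forall x y : T, e x y -> #|nbhd e x :&: nbhd e y| = lam].

Definition is_clique (T : finType) (e : rel T) (S : {set T}) : Prop :=
  forall x y : T, x \in S -> y \in S -> x != y -> e x y.

Definition regular_clique (T : finType) (e : rel T) (S : {set T}) (ee : nat) : Prop :=
  [/\ 0 < ee, is_clique e S &
      forall x : T, x \notin S -> #|nbhd e x :&: S| = ee].

Definition complete (T : finType) (e : rel T) : Prop :=
  forall x y : T, x != y -> e x y.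

Definition neumaier (T : finType) (e : rel T) (v k lam ee s : nat) : Prop :=
  [/\ simple_graph e, ~ complete e, edge_regular e v k lam &
      exists S : {set T}, #|S| = s /\ regular_clique e S ee].

(* Main.v *)
Require Import Defs.
From mathcomp Require Import all_boot zify.
Lemma card_cnt (T : finType) (A : {set T}) (P : pred T) :
  #|A :&: [set x | P x]| = \sum_(x in A) (P x : nat).
Proof.
rewrite -sum1_card [LHS]big_mkcond [RHS]big_mkcond /=.
by apply: eq_bigr => x _; rewrite !inE; case: (x \in A); case: (P x).
Qed.
Lemma sum_ge (T : finType) (A : {set T}) (f : T -> nat) (j : T) :
  (forall u, u \in A -> 1 <= f u) -> j \in A ->
  #|A| - 1 + f j <= \sum_(u in A) f u.
Proof.
move=> h1 hj; rewrite (bigD1 j) //= [f j + _]addnC leq_add2r.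
have -> : #|A| - 1 = \sum_(u in A :\ j) 1.
  by rewrite sum1_card (cardsD1 j A) hj add1n subn1.
rewrite [X in _ <= X](eq_bigl (fun u => u \in A :\ j)); last by move=> u; rewrite !inE andbC.
by apply: leq_sum => u; rewrite !inE => /andP[_ /h1].
Qed.

Theorem mainTheorem3 (l : nat) : 3 <= l ->
  forall (T : finType) (e : rel T),
    ~ neumaier e (6 * l + 3) (4 * l + 2) (3 * l) (l + 1) (2 * l + 1).
Proof.
move=> hl T e [[hsym hirr] _ [hT hreg _ hlam] [S [hS [_ hcl hSreg]]]].
set O := ~: S.
have inN : forall x y, (y \in nbhd e x) = e x y by move=> x y; rewrite inE.
have hO : #|O| = 4*l+2 by have := cardsC S; rewrite hS hT -/O; lia.
have NSo : forall z, z \notin S -> #|nbhd e z :&: S| = l+1 by [].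
have NOo : forall z, z \notin S -> #|nbhd e z :&: O| = 3*l+1.
  move=> z zS; have := cardsID S (nbhd e z); rewrite setDE -/O NSo // hreg; lia.
have NSi : forall x, x \in S -> #|nbhd e x :&: S| = 2*l.
  move=> x xS; have -> : nbhd e x :&: S = S :\ x.
    apply/setP=> y; rewrite !inE; case: (eqVneq y x) => [->|ne]; first by rewrite hirr.
    case yS: (y \in S); last by rewrite andbF.
    rewrite andbT /=; apply: hcl => //; by rewrite eq_sym.
  by have := cardsD1 x S; rewrite xS hS; lia.
have NOi : forall x, x \in S -> #|nbhd e x :&: O| = 2*l+2.
  move=> x xS; have := cardsID S (nbhd e x); rewrite setDE -/O NSi // hreg; lia.
set W := fun z => (O :\: nbhd e z) :\ z.
have hW : forall z, z \notin S -> #|W z| = l.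
  move=> z zS; rewrite /W; have := cardsID (nbhd e z) O; rewrite setIC NOo // hO.
  have := cardsD1 z (O :\: nbhd e z); rewrite !inE zS hirr /=; lia.
have hclS : forall x y, x \in S -> y \in S -> y != x -> e x y.
  by move=> x y xS yS ne; apply: hcl => //; rewrite eq_sym.
have inW : forall z w, (w \in W z) = [&& w != z, ~~ e z w & w \notin S].
  by move=> z w; rewrite !inE.
have partner : forall z x, z \notin S -> x \in S -> e z x -> #|W z :&: nbhd e x| = 1.
  move=> z x zS xS zx.
  have h1 := hlam _ _ zx.
  have h2 := cardsID S (nbhd e z :&: nbhd e x).
  have e3 : (nbhd e z :&: nbhd e x) :&: S = (nbhd e z :&: S) :\ x.
    apply/setP => y; rewrite !inE; case: (eqVneq y x) => [->|ne]; first by rewrite hirr andbF.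
    case yS: (y \in S); rewrite ?andbF //= !andbT.
    by rewrite (hclS x y) ?andbT.
  have h3 := cardsD1 x (nbhd e z :&: S).
  rewrite !inE zx xS /= in h3.
  have e4 : (nbhd e x :&: O) :&: nbhd e z = (nbhd e z :&: nbhd e x) :\: S.
    by apply/setP => y; rewrite !inE; case: (e x y); case: (e z y); case: (y \in S).
  have h4 := cardsID (nbhd e z) (nbhd e x :&: O).
  rewrite e4 NOi // in h4.
  have h5 := cardsD1 z ((nbhd e x :&: O) :\: nbhd e z).
  rewrite !inE hirr zS (hsym x z) zx /= in h5.
  have e5 : W z :&: nbhd e x = ((nbhd e x :&: O) :\: nbhd e z) :\ z.
    by apply/setP => y; rewrite !inE; case: (y == z); case: (e x y); case: (e z y); case: (y \in S).
  rewrite e5; rewrite e3 in h2; rewrite NSo // in h3; lia.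
have hsum : forall z, z \notin S ->
    \sum_(w in W z) #|(nbhd e z :&: S) :&: nbhd e w| = l+1.
  move=> z zS.
  transitivity (\sum_(w in W z) \sum_(x in nbhd e z :&: S) (e w x : nat)).
    by apply: eq_bigr => w _; rewrite -card_cnt.
  rewrite exchange_big /=.
  transitivity (\sum_(x in nbhd e z :&: S) 1).
    apply: eq_bigr => x; rewrite !inE => /andP[zx xS].
    rewrite (eq_bigr (fun w => (e x w : nat))); last by move=> w _; rewrite hsym.
    by rewrite -card_cnt -(partner z x zS xS zx).
  by rewrite sum1_card NSo.
have inter : forall z w, (nbhd e z :&: S) :&: nbhd e w = (nbhd e z :&: S) :&: (nbhd e w :&: S).
  by move=> z w; apply/setP => y; rewrite !inE; case: (e z y); case: (e w y); case: (y \in S).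
have ge1 : forall z w, z \notin S -> w \notin S -> 1 <= #|(nbhd e z :&: S) :&: nbhd e w|.
  move=> z w zS wS; rewrite inter.
  have := cardsUI (nbhd e z :&: S) (nbhd e w :&: S).
  have : #|(nbhd e z :&: S) :|: (nbhd e w :&: S)| <= #|S|.
    by apply: subset_leq_card; apply/subsetP => y; rewrite !inE => /orP[] /andP[].
  rewrite !NSo // hS; lia.
have ge2 : forall z w y, z \notin S -> w \notin S -> y \in S -> ~~ e z y -> ~~ e w y ->
    2 <= #|(nbhd e z :&: S) :&: nbhd e w|.
  move=> z w y zS wS yS zy wy; rewrite inter.
  have := cardsUI (nbhd e z :&: S) (nbhd e w :&: S).
  have : #|(nbhd e z :&: S) :|: (nbhd e w :&: S)| <= #|S :\ y|.
    apply: subset_leq_card; apply/subsetP => u; rewrite !inE => /orP[] /andP[] hu uS;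
     rewrite uS andbT; apply/eqP => uy; move: hu; rewrite uy; apply/negP.
      by [].
    by [].
  have := cardsD1 y S; rewrite yS hS.
  rewrite !NSo //; lia.
have [z zO] : exists z, z \in O by apply/set0Pn; rewrite -card_gt0 hO; lia.
have zS : z \notin S by rewrite inE in zO.
pose m := fun z w => #|(nbhd e z :&: S) :&: nbhd e w|.
set Bd := [set w in W z | 1 < m z w].
have hBd : #|Bd| <= 1.
  rewrite leqNgt; apply/negP => /card_gt1P [w1 [w2 [h1 h2 ne]]].
  move: h1 h2; rewrite !inE -!andbA => /and4P[n1 a1 s1 b1] /and4P[n2 a2 s2 b2].
  have w1W : w1 \in W z by rewrite inW n1 a1 s1.
  have w2W : w2 \in W z by rewrite inW n2 a2 s2.
  have := hsum z zS; rewrite (bigD1 w1) //=.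
  rewrite (eq_bigl (fun u => u \in W z :\ w1)); last by move=> u; rewrite !inE andbC.
  have w2W' : w2 \in W z :\ w1 by rewrite !inE eq_sym ne n2 a2 s2.
  have := @sum_ge _ (W z :\ w1) (fun w => m z w) w2 _ w2W'.
  have := cardsD1 w1 (W z); rewrite w1W hW //.
  have Hi : forall u, u \in W z :\ w1 -> u \notin S.
    by move=> u /setD1P [_]; rewrite inW => /and3P[_ _ ->].
  move=> hc hs H1; have hs' := hs (fun u hu => ge1 z u zS (Hi u hu)).
  rewrite /m in b1 b2 hs' H1; clear -hc hs' H1 b1 b2; lia.
have hG : 1 < #|W z :\: Bd|.
  have := cardsID Bd (W z); rewrite hW //.
  have : #|W z :&: Bd| <= #|Bd| by apply: subset_leq_card; apply: subsetIr.
  lia.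
have [w1 [w2 [g1 g2 ne]]] := card_gt1P hG.
have goodP : forall w, w \in W z :\: Bd -> forall y, y \in S -> ~~ e z y -> e w y.
  move=> w; rewrite inE => /andP[nb wW] y yS zy; apply/negPn/negP => wy.
  move: nb; rewrite inE wW /= -leqNgt /m.
  have : w \notin S by move: wW; rewrite inW => /and3P[].
  move=> wS; have := ge2 z w y zS wS yS zy wy; lia.
have w1W : w1 \in W z by move: g1; rewrite inE => /andP[].
have w2W : w2 \in W z by move: g2; rewrite inE => /andP[].
have w1S : w1 \notin S by move: w1W; rewrite inW => /and3P[].
have w2S : w2 \notin S by move: w2W; rewrite inW => /and3P[].
have mm : l <= #|(nbhd e w1 :&: S) :&: nbhd e w2|.
  have := cardsID (nbhd e z) S; rewrite setIC NSo // hS => h.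
  have : #|S :\: nbhd e z| <= #|(nbhd e w1 :&: S) :&: nbhd e w2|.
    apply: subset_leq_card; apply/subsetP => y; rewrite !inE => /andP[zy yS].
    by rewrite yS (goodP w1 g1 y yS zy) (goodP w2 g2 y yS zy).
  lia.
case: (boolP (e w1 w2)) => h12.
  have h1 := hlam _ _ h12.
  have h2 := cardsID S (nbhd e w1 :&: nbhd e w2).
  have e3 : (nbhd e w1 :&: nbhd e w2) :&: S = (nbhd e w1 :&: S) :&: nbhd e w2.
    by apply/setP => y; rewrite !inE; case: (e w1 y); case: (e w2 y); case: (y \in S).
  have e4 : (nbhd e w1 :&: nbhd e w2) :\: S = (nbhd e w1 :&: O) :&: (nbhd e w2 :&: O).
    by apply/setP => y; rewrite !inE; case: (e w1 y); case: (e w2 y); case: (y \in S).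
  have h3 := cardsUI (nbhd e w1 :&: O) (nbhd e w2 :&: O).
  rewrite !NOo // in h3.
  have : #|(nbhd e w1 :&: O) :|: (nbhd e w2 :&: O)| <= #|O :\ z|.
    apply: subset_leq_card; apply/subsetP => y; rewrite !inE.
    move: w1W w2W; rewrite !inW => /and3P[_ a1 _] /and3P[_ a2 _].
    case: (eqVneq y z) => [->|_] /=.
      by rewrite (hsym w1 z) (hsym w2 z) (negbTE a1) (negbTE a2).
    by case/orP => /andP[].
  have := cardsD1 z O; rewrite zO hO /=.
  rewrite e3 e4 in h2; move=> hc hu; clear -hc hu h1 h2 h3 mm hl; lia.
have w2W1 : w2 \in W w1.
  by rewrite inW eq_sym ne h12 w2S.
have WS : forall u, u \in W w1 -> u \notin S by move=> u; rewrite inW => /and3P[].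
have hs := @sum_ge _ (W w1) (fun w => m w1 w) w2 (fun u hu => ge1 w1 u w1S (WS u hu)) w2W1.
rewrite hsum // hW // /m in hs; clear -hs mm hl; lia.
Qed.
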